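(* Let $M=(X,rk)$ be a matroid on a finite ground set $X$ with rank $r=rk(X)$, and let $j$ be a nonnegative integer. Then $f_1(M)<j+r$ if and only if \[[y^j]T_M(1,y)=\binom{|X|-j-1}{r-1}.\]
   Context: $T_M(x,y)=\sum_{A\subseteq X}(x-1)^{r-rk(A)}(y-1)^{|A|-rk(A)}$ is the Tutte polynomial of $M$, and $[y^j]f(y)$ denotes the coefficient of $y^j$. A flat of $M$ is a set $F\subseteq X$ with $F=\{e\in X: rk(F\cup\{e\})=rk(F)\}$; a hyperplane is a flat of rank $r-1$. $f_1(M)$ is the maximum size of a hyperplane of $M$, i.e. $f_1(M)=\max\{|F|: F\text{ a flat},\ rk(F)=r-1\}$. *)

(* Defs.v *)
From mathcomp Require Import all_boot all_order all_algebra.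
Set Implicit Arguments. Unset Strict Implicit. Unset Printing Implicit Defensive.
Import GRing.Theory Num.Theory.
Local Open Scope ring_scope.

Definition is_matroid_rank (X : finType) (rk : {set X} -> nat) : Prop :=
  [/\ forall A : {set X}, (rk A <= #|A|)%N,
      forall A B : {set X}, A \subset B -> (rk A <= rk B)%N
    & forall A B : {set X}, (rk (A :|: B) + rk (A :&: B) <= rk A + rk B)%N].

Definition is_flat (X : finType) (rk : {set X} -> nat) (F : {set X}) : bool :=
  F == [set e | rk (e |: F) == rk F].

Definition f1 (X : finType) (rk : {set X} -> nat) : nat :=
  \max_(F : {set X} | is_flat rk F && (rk F == (rk setT).-1)) #|F|.

(* Tutte polynomial as a polynomial in y whose coefficients are polynomials
   in x (both over int):
   T_M(x,y) = sum_A (x-1)^(r - rk A) (y-1)^(|A| - rk A). *)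
Definition tutte (X : finType) (rk : {set X} -> nat) : {poly {poly int}} :=
  \sum_(A : {set X})
     (('X - 1) ^+ (rk setT - rk A))%:P * ('X - 1) ^+ (#|A| - rk A).

Definition tutte_x1 (X : finType) (rk : {set X} -> nat) : {poly int} :=
  map_poly (fun p : {poly int} => p.[1]) (tutte rk).

(* Binomial coefficient on integers, combinatorial convention:
   binom(n, k) = 0 when n < 0 or k < 0. *)
Definition binz (n k : int) : int :=
  if (n < 0) || (k < 0) then 0 else ('C(`|n|%N, `|k|%N))%:Z.

(* Main.v *)
Set Warnings "-notation-overridden -ambiguous-paths".
Require Import Defs.
From mathcomp Require Import all_boot all_order all_algebra.
From mathcomp Require Import zify.
Import GRing.Theory Num.Theory.
Set Implicit Arguments. Unset Strict Implicit. Unset Printing Implicit Defensive.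

Lemma rk_single (X : finType) (rho : {set X} -> nat) (hM : is_matroid_rank rho) x :
  rho [set x] <= 1.
Proof. by case: hM => h1 _ _; have := h1 [set x]; rewrite cards1. Qed.

Lemma rkU1 (X : finType) (rho : {set X} -> nat) (hM : is_matroid_rank rho) (A : {set X}) x :
  rho (x |: A) <= rho A + rho [set x].
Proof. case: hM => h1 h2 h3; have := h3 [set x] A; lia. Qed.

Lemma rk_mono (X : finType) (rho : {set X} -> nat) (hM : is_matroid_rank rho) (A B : {set X}) :
  A \subset B -> rho A <= rho B.
Proof. by case: hM => _ h2 _; apply: h2. Qed.

Lemma rk_card (X : finType) (rho : {set X} -> nat) (hM : is_matroid_rank rho) (A : {set X}) :
  rho A <= #|A|.
Proof. by case: hM. Qed.

Definition con (X : finType) (rho : {set X} -> nat) (e : X) : {set X} -> nat :=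
  fun A => rho (e |: A) - 1.

Lemma con_matroid (X : finType) (rho : {set X} -> nat) (hM : is_matroid_rank rho) e :
  rho [set e] = 1 -> is_matroid_rank (con rho e).
Proof.
move=> he; rewrite /con; split.
- move=> A; have := rkU1 hM A e; have := rk_card hM A; lia.
- move=> A B sAB; have := rk_mono hM (setUS [set e] sAB); lia.
- move=> A B; case: hM => _ h2 h3; have := h3 (e |: A) (e |: B).
  have -> : (e |: A) :|: (e |: B) = e |: (A :|: B).
    by apply/setP=> x; rewrite !inE; case: (x == e); case: (x \in A).
  have -> : (e |: A) :&: (e |: B) = e |: (A :&: B).
    by apply/setP=> x; rewrite !inE; case: (x == e); case: (x \in A).
  have := h2 _ _ (subsetUl [set e] (A :|: B)).
  have := h2 _ _ (subsetUl [set e] (A :&: B)).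
  have := h2 _ _ (subsetUl [set e] A).
  have := h2 _ _ (subsetUl [set e] B).
  rewrite he; lia.
Qed.

Lemma exists_sub (X : finType) (T : {set X}) k : k <= #|T| ->
  exists A : {set X}, (A \subset T) /\ #|A| = k.
Proof.
elim: k => [|k IH] hk; first by exists set0; rewrite sub0set cards0.
have [A [sAT cA]] := IH (ltnW hk).
have : ~~ (T \subset A).
  by apply/negP=> sTA; have := subset_leq_card sTA; lia.
case/subsetPn=> x xT xA; exists (x |: A); split.
  by rewrite subUset sub1set xT.
by rewrite cardsU1 xA cA.
Qed.
Definition Bn (n r j : nat) : nat :=
  match r with 0 => (j == n : nat) | s.+1 => if j < n then 'C(n - j.+1, s) else 0 end.

Lemma Bn_pascal m s j : Bn m.+1 s.+1 j = Bn m s.+1 j + Bn m s j.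
Proof.
rewrite /Bn; case: s => [|s].
  rewrite !bin0 ltnS leq_eqVlt; case: ltngtP => //=.
case: (ltngtP j m) => [ljm|lmj|->].
- have -> : j < m.+1 by lia.
  have -> : m.+1 - j.+1 = (m - j.+1).+1 by lia.
  by rewrite binS addnC.
- by have -> : j < m.+1 = false by lia.
- by rewrite ltnSn subnn bin0n.
Qed.

Lemma Bn_loop n r j : 0 < n -> Bn n r j.+1 = Bn n.-1 r j.
Proof.
case: n => [//|n] _ /=; rewrite /Bn; case: r => [|s]; first by rewrite eqSS.
by rewrite ltnS.
Qed.

Lemma Bn0 m s j : Bn m s.+1 j = 0 <-> m < j + s.+1.
Proof.
rewrite /Bn; case: ltnP => hj.
  split; first by move/eqP; rewrite -leqn0 leqNgt bin_gt0 -ltnNge; lia.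
  by move=> h; apply/eqP; rewrite -leqn0 leqNgt bin_gt0 -ltnNge; lia.
split=> // _; lia.
Qed.

Definition NS (X : finType) (rho : {set X} -> nat) (S : {set X}) (k : nat) : Prop :=
  forall A : {set X}, A \subset S -> rho A < rho S -> #|A| < k.

Section Poly.
Local Open Scope ring_scope.

Definition Pm (X : finType) (rho : {set X} -> nat) (S : {set X}) : {poly int} :=
  \sum_(A : {set X} | A \subset S)
     (if rho A == rho S then ('X - 1) ^+ (#|A| - rho A)%N else 0).

Lemma sum_split (X : finType) (R : nmodType) (F : {set X} -> R) (S : {set X}) e :
  e \in S ->
  \sum_(A : {set X} | A \subset S) F A =
  \sum_(A : {set X} | A \subset S :\ e) F A + \sum_(A : {set X} | A \subset S :\ e) F (e |: A).
Proof.
move=> eS; rewrite (bigID (fun A : {set X} => e \in A)) /= addrC; congr (_ + _).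
  by apply: eq_bigl => A; rewrite subsetD1.
rewrite (reindex_onto (fun A => e |: A) (fun A => A :\ e)) /=.
  apply: eq_bigl => A; rewrite subsetD1 subUset sub1set eS setU11 andbT /=.
  congr (_ && _); case eA: (e \in A) => /=.
  - by apply/negbTE/eqP => h; move: eA; rewrite -h !inE eqxx.
  - by apply/eqP/setP => x; rewrite !inE; case: eqP => // ->; rewrite eA.
by move=> A /andP [_ eA]; rewrite setD1K.
Qed.
End Poly.

Section Poly2.
Local Open Scope ring_scope.

Lemma loop_rk (X : finType) (rho : {set X} -> nat) (hM : is_matroid_rank rho) e A :
  rho [set e] = 0%N -> rho (e |: A) = rho A.
Proof.
move=> he; have := rkU1 hM A e; have := rk_mono hM (subsetUr [set e] A); rewrite he; lia.
Qed.

Lemma sum1_eq (X : finType) (rho : {set X} -> nat) (S : {set X}) e :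
  rho S = rho (S :\ e) ->
  \sum_(A : {set X} | A \subset S :\ e)
     (if rho A == rho S then ('X - 1) ^+ (#|A| - rho A)%N else 0) = Pm rho (S :\ e).
Proof. by move=> ->. Qed.

Lemma sum1_zero (X : finType) (rho : {set X} -> nat) (hM : is_matroid_rank rho) (S : {set X}) e :
  (rho (S :\ e) < rho S)%N ->
  \sum_(A : {set X} | A \subset S :\ e)
     (if rho A == rho S then ('X - 1) ^+ (#|A| - rho A)%N else 0) = 0 :> {poly int}.
Proof.
move=> h; apply: big1 => A sA; have := rk_mono hM sA.
by case: eqP => // ->; lia.
Qed.

Lemma sum2_con (X : finType) (rho : {set X} -> nat) (hM : is_matroid_rank rho) (S : {set X}) e :
  e \in S -> rho [set e] = 1%N ->
  \sum_(A : {set X} | A \subset S :\ e)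
     (if rho (e |: A) == rho S then ('X - 1) ^+ (#|e |: A| - rho (e |: A))%N else 0)
  = Pm (con rho e) (S :\ e).
Proof.
move=> eS he; rewrite /Pm /con setD1K //; apply: eq_bigr => A.
rewrite subsetD1 => /andP [_ eA]; rewrite cardsU1 eA.
have := rk_mono hM (subsetUl [set e] A); have eS1 : [set e] \subset S by rewrite sub1set.
have := rk_mono hM eS1.
rewrite he => h1 h2.
have -> : (rho (e |: A) == rho S) = (rho (e |: A) - 1 == rho S - 1)%N.
  by apply/eqP/eqP; lia.
case: eqP => // _; congr (_ ^+ _); lia.
Qed.

Lemma sum2_loop (X : finType) (rho : {set X} -> nat) (hM : is_matroid_rank rho) (S : {set X}) e :
  e \in S -> rho [set e] = 0%N ->
  \sum_(A : {set X} | A \subset S :\ e)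
     (if rho (e |: A) == rho S then ('X - 1) ^+ (#|e |: A| - rho (e |: A))%N else 0)
  = Pm rho (S :\ e) * ('X - 1).
Proof.
move=> eS he; rewrite /Pm mulr_suml.
have hS : rho S = rho (S :\ e) by rewrite -{1}(setD1K eS) (loop_rk hM).
apply: eq_bigr => A; rewrite subsetD1 => /andP [_ eA]; rewrite cardsU1 eA (loop_rk hM) // hS.
case: eqP => _; last by rewrite mul0r.
have := rk_card hM A => h; rewrite -exprSr; congr (_ ^+ _); lia.
Qed.

End Poly2.

Lemma NS_loop (X : finType) (rho : {set X} -> nat) (hM : is_matroid_rank rho) (S : {set X}) e k :
  e \in S -> rho [set e] = 0 ->
  NS rho S k.+1 <-> NS rho (S :\ e) k.
Proof.
move=> eS he.
have hS : rho S = rho (S :\ e) by rewrite -{1}(setD1K eS) (loop_rk hM).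
split=> h A sA; rewrite -?hS => hA.
- have sA' : e |: A \subset S by rewrite subUset sub1set eS (subset_trans sA (subD1set _ _)).
  have := h _ sA'; rewrite (loop_rk hM) // => /(_ hA).
  by rewrite cardsU1; move: sA; rewrite subsetD1 => /andP [_ ->].
- have sA' : A :\ e \subset S :\ e by rewrite setSD.
  have := rk_mono hM (subD1set A e) => hle.
  have := h _ sA'; rewrite -hS => /(_ (leq_ltn_trans hle hA)).
  by have := cardsD1 e A; lia.
Qed.

Lemma NS_con_of (X : finType) (rho : {set X} -> nat) (hM : is_matroid_rank rho) (S : {set X}) e k :
  e \in S -> rho [set e] = 1 ->
  NS rho S k.+1 -> NS (con rho e) (S :\ e) k.
Proof.
move=> eS he h A sA; rewrite /con setD1K // => hA.
have sA' : e |: A \subset S by rewrite subUset sub1set eS (subset_trans sA (subD1set _ _)).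
have eS1 : [set e] \subset S by rewrite sub1set.
have := rk_mono hM eS1; rewrite he => h1.
have := h _ sA'; rewrite cardsU1; move: sA; rewrite subsetD1 => /andP [_ ->].
move=> /(_ _); lia.
Qed.

Lemma NS_back (X : finType) (rho : {set X} -> nat) (hM : is_matroid_rank rho) (S : {set X}) e k (A : {set X}) :
  e \in S -> rho [set e] = 1 -> NS (con rho e) (S :\ e) k ->
  A \subset S -> rho A < rho S -> e \in A -> #|A| < k.+1.
Proof.
move=> eS he h sA hA eA.
have sA' : A :\ e \subset S :\ e by rewrite setSD.
have eA1 : [set e] \subset A by rewrite sub1set.
have := rk_mono hM eA1; rewrite he => h1.
have := h _ sA'; rewrite /con !setD1K // => /(_ _).
by have := cardsD1 e A; rewrite eA; lia.
Qed.

Lemma NS_coloop (X : finType) (rho : {set X} -> nat) (hM : is_matroid_rank rho) (S : {set X}) e k :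
  e \in S -> rho [set e] = 1 -> rho (S :\ e) < rho S ->
  NS rho S k.+1 <-> NS (con rho e) (S :\ e) k /\ #|S :\ e| < k.+1.
Proof.
move=> eS he hco; split.
- move=> h; split; first exact: NS_con_of h.
  by apply: h => //; apply: subD1set.
- move=> [h hc] A sA hA; case eA: (e \in A); first exact: (NS_back hM eS he h).
  have : A \subset S :\ e by rewrite subsetD1 sA eA.
  by move/subset_leq_card; lia.
Qed.

Lemma NS_gen (X : finType) (rho : {set X} -> nat) (hM : is_matroid_rank rho) (S : {set X}) e k :
  e \in S -> rho [set e] = 1 -> rho (S :\ e) = rho S ->
  NS rho S k.+1 <-> NS rho (S :\ e) k.+1 /\ NS (con rho e) (S :\ e) k.
Proof.
move=> eS he hS; split.
- move=> h; split; last exact: NS_con_of h.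
  move=> A sA; rewrite hS => hA; apply: h => //.
  exact: subset_trans sA (subD1set _ _).
- move=> [h1 h2] A sA hA; case eA: (e \in A); first exact: (NS_back hM eS he h2).
  apply: h1; first by rewrite subsetD1 sA eA.
  by rewrite hS.
Qed.

Section Main.
Local Open Scope ring_scope.

Lemma int_sum_eq (a b c d : int) : a <= c -> b <= d -> (a + b = c + d <-> a = c /\ b = d).
Proof. move=> h1 h2; split; last by case=> -> ->. move=> h; lia. Qed.

Lemma main_ind (X : finType) (n : nat) : forall (rho : {set X} -> nat) (S : {set X}),
  is_matroid_rank rho -> #|S| = n -> forall j : nat,
  (Pm rho S)`_j <= (Bn n (rho S) j)%:Z /\
  ((Pm rho S)`_j = (Bn n (rho S) j)%:Z <-> NS rho S (j + rho S)).
Proof.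
elim: n => [|n IH] rho S hM hS j.
  have S0 : S = set0 by apply/eqP; rewrite -cards_eq0 hS.
  have r0 : rho S = 0%N by have := rk_card hM S; rewrite hS; lia.
  have -> : Pm rho S = 1.
    rewrite /Pm (big_pred1 set0); first by rewrite -S0 eqxx hS r0 expr0.
    by move=> A /=; rewrite S0 subset0.
  rewrite r0 coef1 /Bn; have -> : ((j == 0%N)%:R : int) = Posz (j == 0%N) by case: (j == 0%N).
  split=> //.
  by split=> // _ A _; rewrite r0.
have [e eS] : exists e, e \in S by apply/set0Pn; rewrite -card_gt0 hS.
have hS' : #|S :\ e| = n by have := cardsD1 e S; rewrite eS hS; lia.
have eS1 : [set e] \subset S by rewrite sub1set.
have := rk_single hM e; case he: (rho [set e]) => [|[|//]] _.
-
  have hSe : rho S = rho (S :\ e) by rewrite -{1}(setD1K eS) (loop_rk hM).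
  have hP : Pm rho S = Pm rho (S :\ e) * 'X.
    rewrite {1}/Pm (sum_split _ eS) (sum1_eq hSe) (sum2_loop hM eS he).
    by rewrite -{1}[Pm _ _]mulr1 -mulrDr addrC subrK.
  rewrite hP coefMX; case: j => [|j] /=.
  + case hr: (rho S) => [|s].
      by rewrite /Bn /=; split=> //; split=> // _ A _; rewrite hr.
    have sn : (s < n)%N by have := rk_card hM (S :\ e); rewrite -hSe hr hS'.
    rewrite /Bn /= subSS subn0.
    have hpos : (0 < 'C(n, s))%N by rewrite bin_gt0 ltnW.
    split; first by [].
    split=> h; exfalso; first by lia.
    have sn' : (s <= #|S :\ e|)%N by rewrite hS' ltnW.
    have [A' [sA' cA']] := exists_sub sn'.
    have sA : e |: A' \subset S by rewrite subUset sub1set eS (subset_trans sA' (subD1set _ _)).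
    have eA' : e \notin A' by move: sA'; rewrite subsetD1 => /andP [].
    have := h _ sA; rewrite (loop_rk hM) // hr cardsU1 eA' cA' add0n ltnn.
    by have := rk_card hM A'; rewrite cA' ltnS => h1 /(_ h1).
  + rewrite Bn_loop //= hSe.
    have [IH1 IH2] := IH rho (S :\ e) hM hS' j.
    split=> //; rewrite IH2 addSn -hSe; symmetry; rewrite hSe; exact: NS_loop.
-
  have r1 : (1 <= rho S)%N by rewrite -he; exact: rk_mono.
  have hc : con rho e (S :\ e) = (rho S).-1 by rewrite /con setD1K // subn1.
  have [IH1 IH2] := IH (con rho e) (S :\ e) (con_matroid hM he) hS' j.
  rewrite hc in IH1 IH2.
  move: IH1 IH2; case hr: (rho S) r1 => [//|s] _; change (s.+1).-1 with s => IH1 IH2.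
  have Bpos : forall m r i, (0 <= (Bn m r i)%:Z) by [].
  case: (ltnP (rho (S :\ e)) (rho S)) => hco.
  + have hP : Pm rho S = Pm (con rho e) (S :\ e).
      by rewrite {1}/Pm (sum_split _ eS) (sum1_zero hM hco) (sum2_con hM eS he) add0r.
    rewrite hP Bn_pascal PoszD; split; first by have := Bpos n s.+1 j; lia.
    rewrite addnS (NS_coloop hM (j + s) eS he hco) -IH2 hS' -addnS -(Bn0 n s j).
    have hb := Bpos n s.+1 j; split; first by move=> h; split; lia.
    by move=> [h1 h2]; lia.
  + have hSe : rho (S :\ e) = rho S by apply/eqP; rewrite eqn_leq hco rk_mono // subD1set.
    have hP : Pm rho S = Pm rho (S :\ e) + Pm (con rho e) (S :\ e).
      by rewrite {1}/Pm (sum_split _ eS) (sum1_eq (esym hSe)) (sum2_con hM eS he).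
    have [IH1' IH2'] := IH rho (S :\ e) hM hS' j.
    rewrite hSe hr in IH1' IH2'.
    rewrite hP coefD Bn_pascal PoszD int_sum_eq // IH2 IH2' addnS -hr.
    split; first by rewrite hr; lia.
    by rewrite (NS_gen hM (j + s) eS he hSe).
Qed.
End Main.

Section Top.
Local Open Scope ring_scope.

Lemma tutte_Pm (X : finType) (rk : {set X} -> nat) (hM : is_matroid_rank rk) :
  tutte_x1 rk = Pm rk setT.
Proof.
have hq : forall m, (('X - 1) ^+ m : {poly {poly int}}) = map_poly polyC (('X - 1) ^+ m).
  by move=> m; rewrite rmorphXn rmorphB /= map_polyX rmorph1.
apply/polyP => i; rewrite /tutte_x1 /tutte coef_map_id0 ?horner0 //.
rewrite /Pm !coef_sum horner_sum; apply: eq_big => [A|A _]; first by rewrite subsetT.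
rewrite coefCM hq coef_map /= hornerM hornerC horner_exp !hornerE subrr expr0n.
have := rk_mono hM (subsetT A).
move=> hle; have -> : ((rk [set: X] - rk A)%N == 0%N) = (rk A == rk [set: X]).
  by apply/eqP/eqP; lia.
by case: eqP => _; rewrite ?mul1r ?mul0r ?coef0.
Qed.
End Top.

Lemma f1_NS (X : finType) (rk : {set X} -> nat) (hM : is_matroid_rank rk) k :
  0 < k -> 0 < rk setT -> f1 rk < k <-> NS rk setT k.
Proof.
move=> k0 r0; rewrite /f1 -(prednK k0) ltnS; split.
- move/bigmax_leqP => H A _ hA.
  have PA : (A \subset A) && (rk A < rk setT) by rewrite subxx hA.
  case: (@arg_maxnP _ A (fun B : {set X} => (A \subset B) && (rk B < rk setT)) (fun B : {set X} => #|B|) PA) => B /andP [sAB hB] Bmax.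
  have hx : forall x, x \notin B -> rk setT <= rk (x |: B).
    move=> x xB; rewrite leqNgt; apply/negP => hlt.
    have := Bmax (x |: B); rewrite (subset_trans sAB (subsetUr _ _)) hlt cardsU1 xB => /(_ isT).
    by rewrite /= add1n ltnn.
  have hflat : is_flat rk B.
    apply/eqP/setP => x; rewrite inE; case xB: (x \in B).
      have -> : x |: B = B by apply/setUidPr; rewrite sub1set.
      by rewrite eqxx.
    by apply/esym/negbTE; have := hx x (negbT xB); lia.
  have hrk : rk B = (rk setT).-1.
    case: (pickP (fun x => x \notin B)) => [x xB | hall].
      have := hx x xB; have := rkU1 hM B x; have := rk_single hM x; lia.
    have BT : B = setT by apply/setP => y; have := hall y; rewrite inE /=; case: (y \in B).
    by move: hB; rewrite BT ltnn.
  have := H B; rewrite hflat hrk eqxx => /(_ isT) hBk.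
  have := subset_leq_card sAB; lia.
- move=> H; apply/bigmax_leqP => F /andP [_ /eqP hF].
  have := H F (subsetT F); rewrite hF; lia.
Qed.

Section Top2.
Local Open Scope ring_scope.

Lemma binz_Bn (n j s : nat) :
  binz (n%:Z - j%:Z - 1) (s.+1%:Z - 1) = (Bn n s.+1 j)%:Z.
Proof.
rewrite /binz /Bn.
have -> : (s.+1%:Z - 1 < 0) = false by lia.
case: ltnP => hj.
  have -> : (n%:Z - j%:Z - 1 < 0) = false by lia.
  by rewrite /=; congr ('C(_, _)); lia.
by have -> : (n%:Z - j%:Z - 1 < 0) = true by lia.
Qed.

End Top2.

Import GRing.Theory Num.Theory.
Local Open Scope ring_scope.

Theorem theorem3p3 (X : finType) (rk : {set X} -> nat)
  (hM : is_matroid_rank rk) (hr : (0 < rk setT)%N) (j : nat) :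
  (f1 rk < j + rk setT)%N <->
  (tutte_x1 rk)`_j
    = binz (#|X|%:Z - j%:Z - 1) ((rk setT)%:Z - 1).
Proof.
have [_ H] := main_ind hM (cardsT X) j.
rewrite tutte_Pm // (f1_NS hM _ hr); last by rewrite addn_gt0 hr orbT.
move: H; case hs: (rk setT) hr => [//|s] _.
by rewrite binz_Bn => ->.
Qed.
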